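(* Let $\mathcal{T}=(\mathbb{K}_i,\phi_i)_{i=0,\dots,m}$ be a tower with $\mathbb{K}_0=\emptyset$ whose maps are elementary inclusions or elementary contractions, named according to the naming convention below, and let $\hat{\mathbb{K}}_0,\dots,\hat{\mathbb{K}}_m$ be the active small coning construction. For every $0\le i\le m$, $\mathbb{K}_i\subseteq\hat{\mathbb{K}}_i$ and the complex $\hat{\mathbb{K}}_i$ collapses to $\mathbb{K}_i$.
   Context: A free face of a complex is a simplex with exactly one proper coface; an elementary collapse removes a free face and its unique proper coface; $\mathbb{K}$ collapses to $\mathbb{L}$ if a sequence of elementary collapses transforms $\mathbb{K}$ into $\mathbb{L}$. Elementary inclusion: $\mathbb{K}_{i+1}=\mathbb{K}_i\cup\{\sigma\}$, $\sigma\notin\mathbb{K}_i$. Elementary contraction of distinct vertices $u,v$: for one of them, say $v$, the vertex set of $\mathbb{K}_{i+1}$ is that of $\mathbb{K}_i$ minus $v$, $\phi_i(u)=\phi_i(v)=u$, identity elsewhere, $\mathbb{K}_{i+1}=\phi_i(\mathbb{K}_i)$. Active small coning construction: $\hat{\mathbb{K}}_0=\emptyset$; vertices flagged active/inactive, simplex active iff all its vertices are; $\mathrm{Act}\overline{\mathrm{St}}(w,\hat{\mathbb{K}}_i)$ = active simplices of $\hat{\mathbb{K}}_i$ in the closed star of $w$. Inclusion of $\sigma$: add $\sigma$, new vertex active. Contraction of $u,v$: if $|\mathrm{Act}\overline{\mathrm{St}}(u,\hat{\mathbb{K}}_i)|\le|\mathrm{Act}\overline{\mathrm{St}}(v,\hat{\mathbb{K}}_i)|$,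 $\hat{\mathbb{K}}_{i+1}=\hat{\mathbb{K}}_i\cup\{\{v\}\cup\tau:\tau\in\mathrm{Act}\overline{\mathrm{St}}(u,\hat{\mathbb{K}}_i)\}$ and $u$ is marked inactive; otherwise the same with $u,v$ exchanged. Naming convention: each contraction maps $u,v$ to the vertex not marked inactive. *)

(* Defs.v *)
From HB Require Import structures.
From mathcomp Require Import all_boot.
From mathcomp Require Import finmap.
Set Implicit Arguments. Unset Strict Implicit. Unset Printing Implicit Defensive.
Local Open Scope fset_scope.

Definition simplex := {fset nat}.
Definition complex := {fset simplex}.

Definition is_complex (K : complex) : Prop :=
  (forall s, s \in K -> s != fset0) /\
  (forall s t, s \in K -> t `<=` s -> t != fset0 -> t \in K).

Definition is_vertex (w : nat) (K : complex) : bool := [fset w] \in K.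

Definition proper_coface (K : complex) (s t : simplex) : bool :=
  (t \in K) && (s `<` t).

Definition free_face_with (K : complex) (s t : simplex) : Prop :=
  s \in K /\ proper_coface K s t /\
  (forall t', proper_coface K s t' -> t' = t).

Definition elementary_collapse (K L : complex) : Prop :=
  exists s t, free_face_with K s t /\ L = K `\` [fset s; t].

Inductive collapses : complex -> complex -> Prop :=
| collapses_refl K : collapses K K
| collapses_step K K' L : elementary_collapse K K' -> collapses K' L -> collapses K L.

Definition closed_star (w : nat) (K : complex) : {fset simplex} :=
  [fset t in K | [exists s : K, (w \in val s) && (t `<=` val s)]].

Definition act_closed_star (w : nat) (K : complex) (act : {fset nat}) : {fset simplex} :=
  [fset t in closed_star w K | t `<=` act].

Definition cone (v : nat) (S : {fset simplex}) : {fset simplex} :=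
  [fset (v |` (t : simplex)) | t : simplex in S].

Definition contract_map (x y : nat) (w : nat) : nat := if w == x then y else w.
Definition contract (x y : nat) (K : complex) : complex :=
  [fset (contract_map x y @` (s : simplex)) | s : simplex in K].

Inductive tower_op :=
| Incl of simplex
| Contr of nat & nat.

(* State: (K_i, hat K_i, set of active vertices). *)
Definition state := (complex * complex * {fset nat})%type.

Definition init_state : state := (fset0, fset0, fset0).

(* For a contraction of u, v the vertex marked inactive is the one whose
   active closed star is not larger (u in case of a tie); by the naming
   convention, both u and v are mapped to the other (still active) vertex. *)
Definition step (st : state) (op : tower_op) : state :=
  let: (K, Kh, act) := st in
  match op with
  | Incl s => (s |` K, s |` Kh, if #|` s| == 1 then act `|` s else act)
  | Contr u v =>
      let Su := act_closed_star u Kh act in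
      let Sv := act_closed_star v Kh act in
      if #|` Su| <= #|` Sv| then (contract u v K, Kh `|` cone v Su, act `\ u)
      else (contract v u K, Kh `|` cone u Sv, act `\ v)
  end.

Definition state_at (ops : seq tower_op) (i : nat) : state :=
  foldl step init_state (take i ops).

Definition K_at (ops : seq tower_op) (i : nat) : complex := (state_at ops i).1.1.
Definition Khat_at (ops : seq tower_op) (i : nat) : complex := (state_at ops i).1.2.

Definition valid_op (ops : seq tower_op) (i : nat) (op : tower_op) : Prop :=
  match op with
  | Incl s => s \notin K_at ops i /\ is_complex (s |` K_at ops i) /\
              (forall w, s = [fset w] -> forall j, j <= i -> ~~ is_vertex w (K_at ops j))
  | Contr u v => u != v /\ is_vertex u (K_at ops i) /\ is_vertex v (K_at ops i)
  end.

Definition valid_tower (ops : seq tower_op) : Prop :=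
  forall i, i < size ops -> valid_op ops i (nth (Contr 0 0) ops i).

(* Main.v *)
Require Import Defs.
From HB Require Import structures.
From mathcomp Require Import all_boot.
From mathcomp Require Import finmap.
Local Open Scope fset_scope.
Set Implicit Arguments. Unset Strict Implicit.

Lemma coneP v (S : {fset simplex}) m :
  reflect (exists2 t, t \in S & m = v |` t) (m \in cone v S).
Proof. exact: imfsetP. Qed.

Lemma csP w (K : complex) t :
  reflect (t \in K /\ exists2 s, s \in K & (w \in s) && (t `<=` s)) (t \in closed_star w K).
Proof.
rewrite /closed_star !inE /=. apply: (iffP andP) => [[tK /existsP [s Hs]]|[tK [s sK Hs]]].
  by split=> //; exists (val s) => //; exact: valP.
by split=> //; apply/existsP; exists [` sK].
Qed.
Lemma acsE w K act t : (t \in act_closed_star w K act) = (t \in closed_star w K) && (t `<=` act).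
Proof. by rewrite /act_closed_star !inE /=. Qed.

Lemma fsetD1_id (x : nat) (A : {fset nat}) : x \notin A -> A `\ x = A.
Proof.
move=> xA; apply/fsetP => y; rewrite !inE; case: (y =P x) => // ->.
by rewrite (negbTE xA).
Qed.

Lemma ne_of_mem (x : nat) (t : {fset nat}) : x \in t -> t != fset0.
Proof. by move=> xt; apply/fset0Pn; exists x. Qed.

Lemma contractP u v (K : complex) m :
  reflect (exists2 s, s \in K & m = contract_map u v @` s) (m \in contract u v K).
Proof. exact: imfsetP. Qed.

Lemma contract_mapE u v (s : simplex) :
  contract_map u v @` s = if u \in s then v |` (s `\ u) else s.
Proof.
case: ifP => us; apply/fsetP => x; apply/imfsetP/idP.
- move=> [y ys Ex]; rewrite Ex /contract_map; case: (y =P u) => [_|/eqP yu]; first by rewrite fset1U1.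
  by rewrite !inE yu ys orbT.
- move/fset1UP => [->|]; first by exists u => //; rewrite /contract_map eqxx.
  by move/fsetD1P => [/negPf xu xs]; exists x => //; rewrite /contract_map xu.
- move=> [y ys Ex]; rewrite Ex /contract_map; case: (y =P u) => [E|//].
  by rewrite E us in ys.
- move=> xs; exists x => //; rewrite /contract_map; case: (x =P u) => // xu.
  by rewrite xu us in xs.
Qed.

Lemma contract_nou u v (s : simplex) : u != v -> u \notin contract_map u v @` s.
Proof.
move=> uv; apply/imfsetP => -[y _]; rewrite /contract_map; case: (y =P u) => [_ E|/eqP yu E].
  by rewrite E eqxx in uv.
by rewrite E eqxx in yu.
Qed.
Lemma collapses_sub K L : collapses K L -> L `<=` K.
Proof.
elim=> [K0|K0 K1 L0 [s [t [_ ->]]] _ IH]; first exact: fsubset_refl.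
apply: (fsubset_trans IH); exact: fsubsetDl.
Qed.

Lemma collapses_trans K L M : collapses K L -> collapses L M -> collapses K M.
Proof.
elim=> [//|K0 K1 L0 H _ IH] HM; apply: collapses_step H (IH HM).
Qed.

Lemma ext_collapse K L (C : complex) : collapses K L ->
  (forall c t, c \in C -> t `<=` c -> t \in K -> t \in L) ->
  collapses (K `|` C) (L `|` C).
Proof.
elim=> [K0|K0 K1 L0 [s [t [[sK [/andP [tK st] uniq]] EK1]]] HL IH] HC.
  exact: collapses_refl.
have LK1 := collapses_sub HL.
have sK1 : s \notin K1 by rewrite EK1 !inE eqxx.
have tK1 : t \notin K1 by rewrite EK1 !inE eqxx orbT.
have sC : s \notin C.
  apply/negP => sC; have := HC _ _ sC (fsubset_refl s) sK.
  by move/(fsubsetP LK1); rewrite (negbTE sK1).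
have tC : t \notin C.
  apply/negP => tC; have := HC _ _ tC (fsubset_refl t) tK.
  by move/(fsubsetP LK1); rewrite (negbTE tK1).
apply: (collapses_step (K' := K1 `|` C)).
  exists s, t; split.
    split; first by rewrite inE sK.
    split; first by rewrite /proper_coface inE tK st.
    move=> t' /andP [] /[!inE] /orP [t'K|t'C] st'.
      by apply: uniq; rewrite /proper_coface t'K.
    have := HC _ _ t'C (fproper_sub st') sK.
    by move/(fsubsetP LK1); rewrite (negbTE sK1).
  apply/fsetP => x; rewrite EK1 !inE.
  case: (x =P s) => [->|]; first by rewrite (negbTE sC) orbF.
  case: (x =P t) => [->|] /=; first by rewrite (negbTE tC) ?orbF ?andbF.
  by [].
apply: IH => c t0 cC tc t0K1; apply: (HC c t0 cC tc).
by move: t0K1; rewrite EK1 inE => /andP [].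
Qed.
Lemma decomp_D1 (w : nat) (m r : {fset nat}) : m `\ w = r -> m = r \/ m = w |` r.
Proof.
move=> <-; case: (boolP (w \in m)) => wm; first by right; rewrite fsetD1K.
by left; rewrite fsetD1_id.
Qed.

Lemma seq_max (T : eqType) (f : T -> nat) (s : seq T) x0 : x0 \in s ->
  exists2 r, r \in s & forall y, y \in s -> f y <= f r.
Proof.
elim: s x0 => [//|a s IH] x0 _.
case: s IH => [|b s] IH.
  by exists a; rewrite ?inE ?eqxx // => y; rewrite inE => /eqP ->.
have [r rs Hr] := IH b (mem_head _ _).
case: (leqP (f a) (f r)) => H.
  exists r; first by rewrite inE rs orbT.
  by move=> y; rewrite inE => /orP [/eqP ->|/Hr].
exists a; first by rewrite inE eqxx.
move=> y; rewrite inE => /orP [/eqP ->//|/Hr Hy]; exact: leq_trans Hy (ltnW H).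
Qed.

Lemma pair_collapse (w : nat) n : forall (P : {fset simplex}) (K : complex), #|`P| = n ->
 (forall r, r \in P -> [/\ w \notin r, r \in K & w |` r \in K]) ->
 (forall r m, r \in P -> m \in K -> r `<` m -> m `\ w \in P) ->
 collapses K (K `\` (P `|` cone w P)).
Proof.
elim: n => [|n IH] P K HP H1 H2.
  have -> : K `\` (P `|` cone w P) = K.
    apply/fsetP => x; rewrite (cardfs0_eq HP) !inE.
    case: (boolP (x \in cone w fset0)) => [/coneP [t]|]; by rewrite ?inE.
  exact: collapses_refl.
have [r rP rmax] : exists2 r, r \in P & forall r', r' \in P -> #|`r'| <= #|`r|.
  case: (fset_0Vmem P) => [P0|[x xP]]; first by move: HP; rewrite P0 cardfs0.
  exact: (seq_max (fun a : simplex => #|`a|) xP).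
have [wr rK wrK] := H1 r rP.
have wwr : w \in w |` r by rewrite fset1U1.
have rneq : r != w |` r by apply/eqP => E; move: wwr; rewrite -E (negbTE wr).
set K1 := K `\` [fset r; w |` r].
set P1 := P `\ r.
apply: (collapses_step (K' := K1)).
  exists r, (w |` r); split=> //.
  split=> //; split; first by rewrite /proper_coface wrK fproperEneq rneq fsubsetU1.
  move=> t' /andP [t'K rt'].
  have Hm := H2 _ _ rP t'K rt'.
  have rsub : r `<=` t' `\ w by rewrite fsubsetD1 (fproper_sub rt') wr.
  have /eqP Eq : r == t' `\ w by rewrite eqEfcard rsub rmax.
  case: (decomp_D1 (esym Eq)) => // Et'.
  by move: rt'; rewrite Et' (negbTE (fproper_irrefl r)).
have -> : K `\` (P `|` cone w P) = K1 `\` (P1 `|` cone w P1).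
  apply/fsetP => x; apply/idP/idP.
    rewrite in_fsetD in_fsetU negb_or => /andP [/andP [xP xC] xK].
    have xr : x != r by apply: contraNneq xP => ->.
    have xwr : x != w |` r by apply: contraNneq xC => ->; apply/coneP; exists r.
    rewrite in_fsetD in_fsetU negb_or.
    apply/andP; split; last by rewrite /K1 in_fsetD xK !inE negb_or xr xwr.
    apply/andP; split; first by rewrite /P1 in_fsetD1 negb_and xP orbT.
    apply: contra xC => /coneP [t /fsetD1P [_ tP] ->]; apply/coneP; by exists t.
  rewrite in_fsetD in_fsetU negb_or => /andP [/andP [xP1 xC1] xK1].
  move: xK1; rewrite /K1 in_fsetD => /andP [Hx xK].
  rewrite in_fsetD in_fsetU negb_or xK andbT; apply/andP; split.
    apply: contra xP1 => xP; rewrite in_fsetD1 xP andbT.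
    by apply: contra Hx => /eqP ->; rewrite !inE eqxx.
  apply/coneP => -[t tP Ex]; case: (t =P r) => [tr|/eqP tr].
    by move: Hx; rewrite Ex tr !inE eqxx orbT.
  by move/negP: xC1; apply; apply/coneP; exists t; rewrite ?in_fsetD1 ?tr.
apply: IH.
- by move: HP; rewrite (cardfsD1 r) rP add1n => -[].
- move=> r' /fsetD1P [r'r r'P]; have [wr' r'K wr'K] := H1 r' r'P.
  split=> //; rewrite !inE ?r'K ?wr'K !andbT.
    apply/negP => /orP [/eqP E|/eqP E]; first by rewrite E eqxx in r'r.
    by move: wr'; rewrite E fset1U1.
  apply/negP => /orP [/eqP E|/eqP E]; first by move: wr; rewrite -E fset1U1.
  move/eqP: r'r; apply; by rewrite -(fsetU1K wr') -(fsetU1K wr) E.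
- move=> r' m /fsetD1P [r'r r'P] /fsetDP [mK mK'] r'm.
  apply/fsetD1P; split; last exact: H2 _ _ r'P mK r'm.
  apply/eqP => Em; case: (decomp_D1 Em) => Em'; by move: mK'; rewrite Em' !inE eqxx ?orbT.
Qed.


Section Contr.
Variables (K Kh : complex) (act : {fset nat}) (u v : nat).
Hypotheses (HK : is_complex K) (Hact : forall w, (w \in act) = ([fset w] \in K))
  (KKh : K `<=` Kh) (Hact4 : forall t, t \in Kh -> t `<=` act -> t \in K)
  (HKh : is_complex Kh) (uv : u != v) (uK : [fset u] \in K) (vK : [fset v] \in K).

Let S := act_closed_star u Kh act.
Let C := cone v S.
Let P := [fset r in K | (u \in r) && (v \notin r)].
Let R := P `|` cone v P.

Lemma PE r : (r \in P) = (r \in K) && (u \in r) && (v \notin r).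
Proof. by rewrite /P !inE andbA. Qed.

Lemma K_act s : s \in K -> s `<=` act.
Proof.
move=> sK; apply/fsubsetP => x xs; rewrite Hact; apply: HK.2 sK _ _.
  by rewrite fsub1set.
exact: ne_of_mem (fset11 x).
Qed.

Lemma uact : u \in act. Proof. by rewrite Hact. Qed.
Lemma vact : v \in act. Proof. by rewrite Hact. Qed.

Lemma S_K t : t \in S -> [/\ t \in K, t `<=` act & u |` t \in K].
Proof.
rewrite acsE => /andP [/csP [tKh [s sKh /andP [us ts]]] tact].
split => //; first exact: Hact4.
apply: Hact4; last by rewrite fsubUset fsub1set uact tact.
apply: HKh.2 sKh _ _; first by rewrite fsubUset fsub1set us ts.
exact: ne_of_mem (fset1U1 u t).
Qed.

Lemma S_in s t : s \in K -> u \in s -> t `<=` s -> t != fset0 -> t \in S.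
Proof.
move=> sK us ts tne; rewrite acsE; apply/andP; split.
  apply/csP; split; first by apply: (fsubsetP KKh); exact: HK.2 sK ts tne.
  by exists s; [exact: (fsubsetP KKh) | rewrite us ts].
exact: fsubset_trans ts (K_act sK).
Qed.

Lemma C_act c : c \in C -> c `<=` act.
Proof.
case/coneP => t tS ->; have [_ ta _] := S_K tS.
by rewrite fsubUset fsub1set vact ta.
Qed.

Lemma C_v c : c \in C -> v \in c.
Proof. by case/coneP => t tS ->; rewrite fset1U1. Qed.

Lemma sub_U1 (t tau : {fset nat}) w : t `<=` w |` tau -> t `\ w `<=` tau.
Proof.
move/fsubsetP => H; apply/fsubsetP => x /fsetD1P [xw xt].
by move: (H x xt) => /fset1UP [E|//]; rewrite E eqxx in xw.
Qed.

Lemma face_KC m t : m \in K `|` C -> t `<=` m -> t != fset0 -> t \in K `|` C.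
Proof.
rewrite inE => /orP [mK|mC] tm tne; first by rewrite inE (HK.2 _ _ mK tm tne).
case/coneP: mC tm => tau tauS -> tm.
have [tauK _ utauK] := S_K tauS.
have Dsub := sub_U1 tm.
case: (boolP (v \in t)) => vt; last first.
  by rewrite inE (HK.2 _ _ tauK _ tne) // -(fsetD1_id vt).
case: (boolP (t `\ v == fset0)) => [/eqP E|ne].
  by rewrite -(fsetD1K vt) E fsetU0 inE vK.
rewrite inE; apply/orP; right; apply/coneP; exists (t `\ v); last by rewrite fsetD1K.
apply: S_in utauK (fset1U1 u tau) _ ne.
exact: fsubset_trans Dsub (fsubsetU1 _ _).
Qed.

Lemma DvK m : m \in K `|` C -> u \in m -> m `\ v \in K.
Proof.
move=> mKC um.
have umv : u \in m `\ v by rewrite in_fsetD1 uv um.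
have := face_KC mKC (fsubsetDl _ _) (ne_of_mem umv).
rewrite inE => /orP [//|/C_v]; by rewrite fsetD11.
Qed.

Lemma R_u m : m \in R -> u \in m.
Proof.
rewrite inE => /orP [|/coneP [r]]; first by rewrite PE => /andP [/andP [_ ->]].
by rewrite PE => /andP [/andP [_ ur] _] ->; rewrite fset1Ur.
Qed.

Lemma EK' : contract u v K = (K `|` C) `\` R.
Proof.
apply/fsetP => m; apply/idP/idP.
  move/contractP => [s sK ->]; rewrite in_fsetD; apply/andP; split.
    by apply/negP => /R_u; apply/negP; exact: contract_nou.
  rewrite contract_mapE; case: ifP => us; last by rewrite inE sK.
  case: (boolP (s `\ u == fset0)) => [/eqP E|ne]; first by rewrite E fsetU0 inE vK.
  rewrite inE; apply/orP; right; apply/coneP; exists (s `\ u) => //.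
  exact: S_in sK us (fsubsetDl _ _) ne.
rewrite in_fsetD => /andP [mR mKC].
have um : u \notin m.
  apply/negP => um; have Dv := DvK mKC um.
  have DvP : m `\ v \in P by rewrite PE Dv in_fsetD1 uv um fsetD11.
  case: (boolP (v \in m)) => vm; move/negP: mR; apply; rewrite inE; apply/orP.
    by right; apply/coneP; exists (m `\ v); rewrite ?fsetD1K.
  by left; rewrite -(fsetD1_id vm).
move: mKC; rewrite inE => /orP [mK|mC].
  by apply/contractP; exists m => //; rewrite contract_mapE (negbTE um).
case/coneP: mC um => tau tauS -> um.
have [_ _ utauK] := S_K tauS.
have utau : u \notin tau by apply: contra um; exact: fset1Ur.
apply/contractP; exists (u |` tau) => //.
by rewrite contract_mapE fset1U1 fsetU1K.
Qed.

Lemma collapse_C : collapses Kh K -> collapses (Kh `|` C) (contract u v K).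
Proof.
move=> HcK; apply: collapses_trans (ext_collapse HcK _) _.
  move=> c t cC tc tKh; apply: Hact4 tKh (fsubset_trans tc (C_act cC)).
rewrite EK'; apply: (@pair_collapse v #|`P|) => //.
  move=> r; rewrite PE => /andP [/andP [rK ur] vr]; split=> //; first by rewrite inE rK.
  rewrite inE; apply/orP; right; apply/coneP; exists r => //.
  exact: S_in rK ur (fsubset_refl r) (ne_of_mem ur).
move=> r m; rewrite PE => /andP [/andP [rK ur] vr] mKC rm.
have um : u \in m by apply: (fsubsetP (fproper_sub rm)).
by rewrite PE (DvK mKC um) in_fsetD1 uv um fsetD11.
Qed.

Lemma K'_nou m : m \in contract u v K -> u \notin m.
Proof. by case/contractP => s _ ->; exact: contract_nou. Qed.

Lemma KC_act m : m \in K `|` C -> m `<=` act.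
Proof. by rewrite inE => /orP [/K_act|/C_act]. Qed.

Lemma K'_act m : m \in contract u v K -> m `<=` act `\ u.
Proof.
move=> mK'; rewrite fsubsetD1 (K'_nou mK') andbT.
by move: mK'; rewrite EK' in_fsetD => /andP [_ /KC_act].
Qed.

Lemma contr_good :
  [/\ is_complex (contract u v K),
      (forall w, (w \in act `\ u) = ([fset w] \in contract u v K)),
      contract u v K `<=` Kh `|` C,
      (forall t, t \in Kh `|` C -> t `<=` act `\ u -> t \in contract u v K)
    & is_complex (Kh `|` C)].
Proof.
split.
- split.
    move=> m; rewrite EK' in_fsetD => /andP [_]; rewrite inE => /orP [/HK.1 //|/C_v].
    exact: ne_of_mem.
  move=> m t mK' tm tne; rewrite EK' in_fsetD; apply/andP; split.
    apply/negP => /R_u ut; move/negP: (K'_nou mK'); apply; exact: (fsubsetP tm).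
  by move: mK'; rewrite EK' in_fsetD => /andP [_ mKC]; exact: face_KC mKC tm tne.
- move=> w; apply/idP/idP.
    move/fsetD1P => [wu wa]; rewrite EK' in_fsetD; apply/andP; split.
      by apply/negP => /R_u /fset1P E; rewrite E eqxx in wu.
    by rewrite inE -Hact wa.
  by move/K'_act; rewrite fsub1set.
- rewrite EK'; apply/fsubsetP => m; rewrite in_fsetD => /andP [_].
  rewrite !inE => /orP [/(fsubsetP KKh) -> //|->]; by rewrite orbT.
- move=> t tKhC /fsubsetD1P [ta ut]; rewrite EK' in_fsetD; apply/andP; split.
    by apply/negP => /R_u; apply/negP.
  move: tKhC; rewrite !inE => /orP [tKh|->]; last by rewrite orbT.
  by rewrite (Hact4 tKh ta).
- split.
    move=> m; rewrite inE => /orP [/HKh.1 //|/C_v]; exact: ne_of_mem.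
  move=> m t; rewrite inE => /orP [mKh tm tne|mC tm tne].
    by rewrite inE (HKh.2 _ _ mKh tm tne).
  have : t \in K `|` C by apply: face_KC tm tne; rewrite inE mC orbT.
  rewrite !inE => /orP [/(fsubsetP KKh) -> //|->]; by rewrite orbT.
Qed.

Lemma contr_hist t x : t \in Kh `|` C -> x \in t ->
  (exists2 t0, t0 \in Kh & x \in t0) \/ [fset x] \in K.
Proof.
rewrite inE => /orP [tKh xt|/coneP [tau tauS ->] /fset1UP [->|xt]]; first by left; exists t.
  by right.
left; exists tau => //; have [tauK _ _] := S_K tauS; exact: (fsubsetP KKh).
Qed.

End Contr.

Definition good (K Kh : complex) (act : {fset nat}) :=
  [/\ is_complex K, (forall w, (w \in act) = ([fset w] \in K)), K `<=` Kh,
      (forall t, t \in Kh -> t `<=` act -> t \in K) & is_complex Kh] /\ collapses Kh K.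

Lemma contr_all K Kh act u v : good K Kh act -> u != v -> [fset u] \in K -> [fset v] \in K ->
  good (contract u v K) (Kh `|` cone v (act_closed_star u Kh act)) (act `\ u) /\
  (forall t x, t \in Kh `|` cone v (act_closed_star u Kh act) -> x \in t ->
     (exists2 t0, t0 \in Kh & x \in t0) \/ [fset x] \in K).
Proof.
move=> [[HK Hact KKh Hact4 HKh] Hc] uv uK vK.
have [G1 G2 G3 G4 G6] := contr_good HK Hact KKh Hact4 HKh uv uK vK.
split; last exact: contr_hist.
split; first by split.
exact: collapse_C.
Qed.

Lemma incl_all K Kh act (s : simplex) : good K Kh act -> s \notin K -> is_complex (s |` K) ->
  (forall w, s = [fset w] -> forall t, t \in Kh -> w \notin t) ->
  good (s |` K) (s |` Kh) (if #|` s| == 1 then act `|` s else act) /\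
  (forall t x, t \in s |` Kh -> x \in t ->
     (exists2 t0, t0 \in Kh & x \in t0) \/ [fset x] \in s |` K).
Proof.
move=> [[HK Hact KKh Hact4 HKh] Hc] sK HsK fresh.
have vs : forall x, x \in s -> [fset x] \in s |` K.
  move=> x xs; apply: HsK.2 (fset1U1 s K) _ _; first by rewrite fsub1set.
  exact: ne_of_mem (fset11 x).
have sub_act : forall t, t \in Kh -> t `<=` s -> t `<=` act.
  move=> t tKh ts; apply/fsubsetP => x xt.
  have := vs x (fsubsetP ts x xt); case/fset1UP => [E|]; last by rewrite Hact.
  by move: (fresh x (esym E) t tKh); rewrite xt.
split; last first.
  move=> t x /fset1UP [->|tKh] xt; [by right; apply: vs | by left; exists t].
split; first split=> //.
- move=> w; case: ifP => [/cardfs1P [a Ea]|Hs].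
    rewrite Ea !inE -Hact orbC; congr (_ || _); apply/idP/idP => [/eqP ->//|/eqP /fset1_inj ->//].
  rewrite !inE; case: ([fset w] =P s) => [E|_]; last by rewrite Hact.
  by move: Hs; rewrite -E cardfs1.
- exact: fsetUS.
- move=> t /fset1UP [->|tKh] tact; first exact: fset1U1.
  rewrite inE; apply/orP; right; apply: Hact4 => //.
  apply/fsubsetP => x xt; have := fsubsetP tact x xt.
  case: ifP => // /cardfs1P [a Ea]; rewrite inE => /orP [//|xs].
  by move: (fresh a Ea t tKh); rewrite Ea in xs; move/fset1P: xs => <-; rewrite xt.
- split.
    move=> m /fset1UP [->|/HKh.1 //]; exact: HsK.1 _ (fset1U1 s K).
  move=> m t /fset1UP [->|mKh] tm tne; last by rewrite inE (HKh.2 _ _ mKh tm tne) orbT.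
  by apply: (fsubsetP (fsetUS [fset s] KKh)); apply: HsK.2 (fset1U1 s K) tm tne.
- have -> : s |` Kh = Kh `|` [fset s] by rewrite fsetUC.
  have -> : s |` K = K `|` [fset s] by rewrite fsetUC.
  apply: ext_collapse Hc _ => c t /fset1P -> ts tKh.
  exact: Hact4 tKh (sub_act t tKh ts).
Qed.

Definition Inv ops i :=
  good (K_at ops i) (Khat_at ops i) (state_at ops i).2 /\
  (forall t x, t \in Khat_at ops i -> x \in t ->
     exists2 j, j <= i & [fset x] \in (state_at ops j).1.1).

Lemma inv0 ops : Inv ops 0.
Proof.
rewrite /Inv /K_at /Khat_at /state_at take0 /=; split.
  split=> //; try by split.
  exact: collapses_refl.
by [].
Qed.

Lemma inv_step ops i : i < size ops -> valid_op ops i (nth (Contr 0 0) ops i) ->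
  Inv ops i -> Inv ops i.+1.
Proof.
move=> Hi.
have E : state_at ops i.+1 = step (state_at ops i) (nth (Contr 0 0) ops i).
  by rewrite /state_at (take_nth (Contr 0 0) Hi) foldl_rcons.
rewrite /Inv /valid_op /K_at /Khat_at E.
case Es: (state_at ops i) => [[K Kh] act] /=.
case En: (nth (Contr 0 0) ops i) => [s|u v] /=.
  move=> [sK [HsK fr]] [HG Hh].
  have fresh : forall w, s = [fset w] -> forall t, t \in Kh -> w \notin t.
    move=> w Ew t tKh; apply/negP => wt.
    have [j ji Hj] := Hh t w tKh wt.
    by move: (fr w Ew j ji); rewrite /is_vertex /K_at Hj.
  have [G H] := incl_all HG sK HsK fresh.
  split=> // t x tK xt; case: (H t x tK xt) => [[t0 t0Kh xt0]|Hx].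
    have [j ji Hj] := Hh t0 x t0Kh xt0; exists j => //; exact: leqW.
  by exists i.+1 => //; rewrite E Es En.
move=> [uv [uK vK]] [HG Hh].
case: ifP => _.
  have [G H] := contr_all HG uv uK vK.
  split=> // t x tK xt; case: (H t x tK xt) => [[t0 t0Kh xt0]|Hx].
    have [j ji Hj] := Hh t0 x t0Kh xt0; exists j => //; exact: leqW.
  by exists i => //; rewrite Es.
rewrite eq_sym in uv.
have [G H] := contr_all HG uv vK uK.
split=> // t x tK xt; case: (H t x tK xt) => [[t0 t0Kh xt0]|Hx].
  have [j ji Hj] := Hh t0 x t0Kh xt0; exists j => //; exact: leqW.
by exists i => //; rewrite Es.
Qed.

Theorem lemma5 (ops : seq tower_op) :
  valid_tower ops ->
  forall i, i <= size ops ->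
    K_at ops i `<=` Khat_at ops i /\ collapses (Khat_at ops i) (K_at ops i).
Proof.
move=> Hv i; elim: i => [|i IH] Hi.
  by have [[[_ _ H _ _] Hc] _] := inv0 ops.
have HI : Inv ops i.+1.
  elim: i {IH} Hi => [|i IHi] Hi.
    apply: inv_step => //; [exact: Hv | exact: inv0].
  apply: inv_step => //; [exact: Hv | apply: IHi; exact: ltnW].
by have [[[_ _ H _ _] Hc] _] := HI.
Qed.
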